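(* Let $\mathbb{S}\subseteq\mathbb{R}$ be an interval, let $\gamma>0$, and let $f:\mathbb{S}\to(0,\infty)$ be twice differentiable such that $H(z)=\gamma\log\big(1+[f(z)]^{1/\gamma}\big)$ is twice continuously differentiable on $\mathbb{S}$. Then the scalar matching loss $\mathcal{L}_m(\hat s,s)=H(\hat s)-H(s)-(\hat s-s)H'(s)$ is convex in $\hat s$ over $\mathbb{S}$ (for all $s\in\mathbb{S}$) if and only if $$f''(z)+\Big[\frac1\gamma-1-\frac1\gamma\cdot\frac{[f(z)]^{1/\gamma}}{1+[f(z)]^{1/\gamma}}\Big]\frac{[f'(z)]^2}{f(z)}\ge0\quad\text{for all }z\in\mathbb{S}.$$
   Context: $f$ is the score-transform function; equivalently $f=e^{Q}$ with $Q$ the log score-transform, and $H(z)=\gamma\log(1+e^{Q(z)/\gamma})$ is the $\gamma$-regularized composite Softplus primitive. *)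

(* Defs.v *)
From Stdlib Require Import Reals.
From Coquelicot Require Import Coquelicot.
Open Scope R_scope.

Definition is_interval (S : R -> Prop) : Prop :=
  forall x y z, S x -> S y -> x <= z <= y -> S z.

Definition Hsp (gamma : R) (f : R -> R) (z : R) : R :=
  gamma * ln (1 + Rpower (f z) (/ gamma)).

Definition Lm (H : R -> R) (shat s : R) : R :=
  H shat - H s - (shat - s) * Derive H s.

Definition convex_on (S : R -> Prop) (g : R -> R) : Prop :=
  forall x y t, S x -> S y -> 0 <= t <= 1 ->
    g (t * x + (1 - t) * y) <= t * g x + (1 - t) * g y.

(* Main.v *)
Require Import Defs.
From Stdlib Require Import Reals Lra.
From Coquelicot Require Import Coquelicot.
Open Scope R_scope.

Definition phi (g : R) (f : R -> R) (y : R) :=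
  Derive f y * exp (/g * ln (f y)) / (f y * (1 + exp (/g * ln (f y)))).

Definition Cx (g : R) (f : R -> R) (z : R) :=
  Derive (Derive f) z
      + (/ g - 1 - / g * (Rpower (f z) (/ g) / (1 + Rpower (f z) (/ g))))
        * (Derive f z) ^ 2 / f z.

Definition Gx (g : R) (f : R -> R) (z : R) :=
  exp (/g * ln (f z)) / (f z * (1 + exp (/g * ln (f z)))).

Lemma dH g f y : 0 < g -> 0 < f y -> ex_derive f y -> is_derive (Hsp g f) y (phi g f y).
Proof.
  intros Hg Hf Hd. unfold Hsp, Rpower, phi.
  assert (He := exp_pos (/ g * ln (f y))).
  auto_derive.
  - repeat split; auto; lra.
  - change (fun x => f x) with f. field. repeat split; lra.
Qed.

Lemma dphi g f y : 0 < g -> 0 < f y -> ex_derive f y -> ex_derive (Derive f) y ->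
  is_derive (phi g f) y (Gx g f y * Cx g f y).
Proof.
  intros Hg Hf Hd Hd2. unfold phi, Gx, Cx, Rpower.
  assert (He := exp_pos (/ g * ln (f y))).
  auto_derive.
  - repeat split; auto; try lra. apply Rgt_not_eq. apply Rmult_lt_0_compat; lra.
  - change (fun x => f x) with f. change (fun x => Derive f x) with (Derive f). field. repeat split; lra.
Qed.

Lemma side_le (F : R -> R) x l d0 M : is_derive F x l -> 0 < d0 ->
  ((forall h, 0 < h < d0 -> (F (x + h) - F x) / h <= M) \/
   (forall h, - d0 < h < 0 -> (F (x + h) - F x) / h <= M)) -> l <= M.
Proof.
  intros HD Hd0 Hs. destruct (Rle_or_lt l M) as [|Hlt]; auto. exfalso.
  apply is_derive_Reals in HD.
  assert (Hp : 0 < l - M) by lra.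
  destruct (HD (l - M) Hp) as [[d Hdp] Hdel]. simpl in Hdel.
  assert (Hm : 0 < Rmin d d0) by (apply Rmin_pos; lra).
  assert (Hm1 := Rmin_l d d0). assert (Hm2 := Rmin_r d d0).
  destruct Hs as [Hs|Hs].
  - set (h := Rmin d d0 / 2).
    assert (Hq := Hs h ltac:(unfold h; lra)).
    assert (Ha : Rabs h < d) by (rewrite Rabs_right; unfold h; lra).
    destruct (Rabs_def2 _ _ (Hdel h ltac:(unfold h; lra) Ha)). lra.
  - set (h := - (Rmin d d0 / 2)).
    assert (Hq := Hs h ltac:(unfold h; lra)).
    assert (Ha : Rabs h < d) by (rewrite Rabs_left; unfold h; lra).
    destruct (Rabs_def2 _ _ (Hdel h ltac:(unfold h; lra) Ha)). lra.
Qed.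

Lemma side_ge (F : R -> R) x l d0 M : is_derive F x l -> 0 < d0 ->
  ((forall h, 0 < h < d0 -> (F (x + h) - F x) / h >= M) \/
   (forall h, - d0 < h < 0 -> (F (x + h) - F x) / h >= M)) -> l >= M.
Proof.
  intros HD Hd0 Hs. destruct (Rle_or_lt M l) as [|Hlt]; [lra|]. exfalso.
  apply is_derive_Reals in HD.
  assert (Hp : 0 < M - l) by lra.
  destruct (HD (M - l) Hp) as [[d Hdp] Hdel]. simpl in Hdel.
  assert (Hm : 0 < Rmin d d0) by (apply Rmin_pos; lra).
  assert (Hm1 := Rmin_l d d0). assert (Hm2 := Rmin_r d d0).
  destruct Hs as [Hs|Hs].
  - set (h := Rmin d d0 / 2).
    assert (Hq := Hs h ltac:(unfold h; lra)).
    assert (Ha : Rabs h < d) by (rewrite Rabs_right; unfold h; lra).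
    destruct (Rabs_def2 _ _ (Hdel h ltac:(unfold h; lra) Ha)). lra.
  - set (h := - (Rmin d d0 / 2)).
    assert (Hq := Hs h ltac:(unfold h; lra)).
    assert (Ha : Rabs h < d) by (rewrite Rabs_left; unfold h; lra).
    destruct (Rabs_def2 _ _ (Hdel h ltac:(unfold h; lra) Ha)). lra.
Qed.

Lemma side (S : R -> Prop) z a b : is_interval S -> S z -> S a -> S b -> a < b ->
  exists d0, 0 < d0 /\ ((forall h, 0 < h < d0 -> S (z + h)) \/
                        (forall h, - d0 < h < 0 -> S (z + h))).
Proof.
  intros HI Hz Ha Hb Hab. destruct (Rlt_or_le z b).
  - exists (b - z). split; [lra|]. left. intros h Hh. apply (HI z b); auto; lra.
  - exists (z - a). split; [lra|]. right. intros h Hh. apply (HI a z); auto; lra.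
Qed.

Lemma div_le A h M : 0 < h -> A <= M * h -> A / h <= M.
Proof. intros. assert (A / h * h = A) by (field; lra). nra. Qed.
Lemma div_ge_neg A h M : h < 0 -> A <= M * h -> A / h >= M.
Proof. intros. assert (A / h * h = A) by (field; lra). nra. Qed.
Lemma div_ge0 A h : 0 < h -> 0 <= A -> A / h >= 0.
Proof. intros. assert (A / h * h = A) by (field; lra). nra. Qed.
Lemma div_ge0' A h : h < 0 -> A <= 0 -> A / h >= 0.
Proof. intros. assert (A / h * h = A) by (field; lra). nra. Qed.

Lemma agree (S : R -> Prop) (D : R -> R) z a b l : is_interval S -> S z -> S a -> S b -> a < b ->
  is_derive D z l -> (forall y, S y -> D y = 0) -> l = 0.
Proof.
  intros HI Hz Ha Hb Hab HD H0.
  destruct (side S z a b HI Hz Ha Hb Hab) as [d0 [Hd0 Hs]].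
  assert (Hq : forall h, S (z + h) -> h <> 0 -> (D (z + h) - D z) / h = 0).
  { intros h Hh Hn. rewrite (H0 _ Hh), (H0 _ Hz). field. auto. }
  apply Rle_antisym.
  - apply (side_le D z l d0 0 HD Hd0).
    destruct Hs as [Hs|Hs]; [left|right]; intros h Hh; rewrite Hq; auto; lra.
  - apply Rge_le. apply (side_ge D z l d0 0 HD Hd0).
    destruct Hs as [Hs|Hs]; [left|right]; intros h Hh; rewrite Hq; auto; lra.
Qed.

Lemma conv_mono (S : R -> Prop) (H : R -> R) x y : is_interval S -> convex_on S H ->
  S x -> S y -> x < y -> ex_derive H x -> ex_derive H y -> Derive H x <= Derive H y.
Proof.
  intros HI Hc Hx Hy Hxy Dx Dy.
  set (s := (H y - H x) / (y - x)).
  assert (L1 : Derive H x <= s).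
  { apply (side_le H x _ (y - x) s (Derive_correct _ _ Dx)); [lra|].
    left. intros h Hh. apply div_le; [lra|].
    set (t := h / (y - x)).
    assert (Ht : 0 <= t <= 1).
    { unfold t. split. apply Rlt_le, Rdiv_lt_0_compat; lra.
      apply div_le; lra. }
    assert (E : x + h = t * y + (1 - t) * x) by (unfold t; field; lra).
    rewrite E. assert (C := Hc y x t Hy Hx Ht).
    assert (E2 : s * h = t * (H y - H x)) by (unfold s, t; field; lra).
    rewrite E2. lra. }
  assert (L2 : Derive H y >= s).
  { apply (side_ge H y _ (y - x) s (Derive_correct _ _ Dy)); [lra|].
    right. intros h Hh. apply div_ge_neg; [lra|].
    set (t := 1 + h / (y - x)).
    assert (Ht : 0 <= t <= 1).
    { unfold t. assert (h / (y - x) * (y - x) = h) by (field; lra).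
      split; nra. }
    assert (E : y + h = t * y + (1 - t) * x) by (unfold t; field; lra).
    rewrite E. assert (C := Hc y x t Hy Hx Ht).
    assert (E2 : s * h = (t - 1) * (H y - H x)) by (unfold s, t; field; lra).
    rewrite E2. lra. }
  lra.
Qed.

Lemma cont_of (F : R -> R) x : ex_derive F x -> continuity_pt F x.
Proof. intros D. apply continuity_pt_filterlim. exact (ex_derive_continuous F x D). Qed.

Lemma mono_of_d2 (S : R -> Prop) (H : R -> R) x y : is_interval S ->
  (forall z, S z -> ex_derive H z /\ ex_derive (Derive H) z) ->
  (forall z, S z -> Derive (Derive H) z >= 0) ->
  S x -> S y -> x <= y -> Derive H x <= Derive H y.
Proof.
  intros HI HD H2 Hx Hy Hxy.
  destruct (Req_dec x y) as [->|Hne]; [lra|].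
  destruct (MVT_gen (Derive H) x y (Derive (Derive H))) as [c [Hc E]].
  - intros z Hz. rewrite Rmin_left, Rmax_right in Hz by lra.
    apply Derive_correct. apply HD. apply (HI x y); auto; lra.
  - intros z Hz. rewrite Rmin_left, Rmax_right in Hz by lra.
    apply cont_of. apply HD. apply (HI x y); auto; lra.
  - rewrite Rmin_left, Rmax_right in Hc by lra.
    assert (Sc : S c) by (apply (HI x y); auto; lra).
    assert (P := H2 c Sc). nra.
Qed.

Lemma conv_aux (S : R -> Prop) (H : R -> R) x y t : is_interval S ->
  (forall z, S z -> ex_derive H z /\ ex_derive (Derive H) z) ->
  (forall z, S z -> Derive (Derive H) z >= 0) ->
  S x -> S y -> x <= y -> 0 <= t <= 1 ->
  H (t * x + (1 - t) * y) <= t * H x + (1 - t) * H y.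
Proof.
  intros HI HD H2 Hx Hy Hxy Ht.
  set (m := t * x + (1 - t) * y).
  assert (Hm : x <= m <= y) by (unfold m; nra).
  assert (Sm : S m) by (apply (HI x y); auto).
  destruct (MVT_gen H x m (Derive H)) as [c1 [Hc1 E1]].
  { intros z Hz. rewrite Rmin_left, Rmax_right in Hz by lra.
    apply Derive_correct. apply HD. apply (HI x y); auto; lra. }
  { intros z Hz. rewrite Rmin_left, Rmax_right in Hz by lra.
    apply cont_of. apply HD. apply (HI x y); auto; lra. }
  destruct (MVT_gen H m y (Derive H)) as [c2 [Hc2 E2]].
  { intros z Hz. rewrite Rmin_left, Rmax_right in Hz by lra.
    apply Derive_correct. apply HD. apply (HI x y); auto; lra. }
  { intros z Hz. rewrite Rmin_left, Rmax_right in Hz by lra.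
    apply cont_of. apply HD. apply (HI x y); auto; lra. }
  rewrite Rmin_left, Rmax_right in Hc1, Hc2 by lra.
  assert (S1 : S c1) by (apply (HI x y); auto; lra).
  assert (S2 : S c2) by (apply (HI x y); auto; lra).
  assert (Mo := mono_of_d2 S H c1 c2 HI HD H2 S1 S2 ltac:(lra)).
  assert (Em1 : m - x = (1 - t) * (y - x)) by (unfold m; ring).
  assert (Em2 : y - m = t * (y - x)) by (unfold m; ring).
  rewrite Em1 in E1. rewrite Em2 in E2.
  assert (P : 0 <= t * (1 - t) * (y - x)) by (apply Rmult_le_pos; nra).
  assert (Q : t * (1 - t) * (y - x) * Derive H c1 <= t * (1 - t) * (y - x) * Derive H c2)
    by (apply Rmult_le_compat_l; auto).
  assert (t * (H m - H x) <= (1 - t) * (H y - H m)) by (rewrite E1, E2; nra).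
  fold m. nra.
Qed.

Lemma conv_iff (S : R -> Prop) (H : R -> R) a b : is_interval S -> S a -> S b -> a < b ->
  (forall z, S z -> ex_derive H z /\ ex_derive (Derive H) z) ->
  (convex_on S H <-> forall z, S z -> Derive (Derive H) z >= 0).
Proof.
  intros HI Ha Hb Hab HD. split.
  - intros Hc z Hz.
    destruct (side S z a b HI Hz Ha Hb Hab) as [d0 [Hd0 Hs]].
    destruct (HD z Hz) as [D1 D2].
    apply (side_ge (Derive H) z _ d0 0 (Derive_correct _ _ D2) Hd0).
    destruct Hs as [Hs|Hs]; [left|right]; intros h Hh.
    + apply div_ge0; [lra|].
      assert (Derive H z <= Derive H (z + h)); [|lra].
      apply (conv_mono S H); auto; try apply HD; auto. lra.
    + apply div_ge0'; [lra|].
      assert (Derive H (z + h) <= Derive H z); [|lra].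
      apply (conv_mono S H); auto; try apply HD; auto. lra.
  - intros H2 x y t Hx Hy Ht.
    destruct (Rle_or_lt x y).
    + apply (conv_aux S); auto.
    + assert (C := conv_aux S H y x (1 - t) HI HD H2 Hy Hx ltac:(lra) ltac:(lra)).
      replace ((1 - t) * y + (1 - (1 - t)) * x) with (t * x + (1 - t) * y) in C by ring.
      lra.
Qed.

Lemma Lm_iff (S : R -> Prop) (H : R -> R) a : S a ->
  ((forall s, S s -> convex_on S (fun shat => Lm H shat s)) <-> convex_on S H).
Proof.
  intros Ha. split.
  - intros Hc x y t Hx Hy Ht. assert (C := Hc a Ha x y t Hx Hy Ht). unfold Lm in C.
    set (d := Derive H a) in C.
    assert (E : (t * x + (1 - t) * y - a) * d = t * ((x - a) * d) + (1 - t) * ((y - a) * d)) by ring.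
    rewrite E in C. lra.
  - intros Hc s Hs x y t Hx Hy Ht. assert (C := Hc x y t Hx Hy Ht). unfold Lm.
    set (d := Derive H s).
    assert (E : (t * x + (1 - t) * y - s) * d = t * ((x - s) * d) + (1 - t) * ((y - s) * d)) by ring.
    rewrite E. lra.
Qed.

Theorem corollaryG2 (S : R -> Prop) (gamma : R) (f : R -> R) :
  is_interval S ->
  (exists a b, S a /\ S b /\ a < b) ->
  0 < gamma ->
  (forall z, S z -> 0 < f z) ->
  (forall z, S z -> ex_derive f z /\ ex_derive (Derive f) z) ->
  (forall z, S z ->
     ex_derive (Hsp gamma f) z /\ ex_derive (Derive (Hsp gamma f)) z /\
     filterlim (Derive (Derive (Hsp gamma f))) (within S (locally z))
               (locally (Derive (Derive (Hsp gamma f)) z))) ->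
  ((forall s, S s -> convex_on S (fun shat => Lm (Hsp gamma f) shat s))
   <->
   (forall z, S z ->
      Derive (Derive f) z
      + (/ gamma - 1 - / gamma * (Rpower (f z) (/ gamma) / (1 + Rpower (f z) (/ gamma))))
        * (Derive f z) ^ 2 / f z >= 0)).
Proof.
  intros HI [a [b [Ha [Hb Hab]]]] Hg Hf Hfd HH.
  assert (HD : forall z, S z -> ex_derive (Hsp gamma f) z /\ ex_derive (Derive (Hsp gamma f)) z)
    by (intros z Hz; destruct (HH z Hz) as [? [? ?]]; auto).
  assert (F1 : forall y, S y -> Derive (Hsp gamma f) y = phi gamma f y).
  { intros y Hy. apply is_derive_unique. apply dH; auto; apply Hfd; auto. }
  assert (F2 : forall z, S z -> Derive (Derive (Hsp gamma f)) z = Gx gamma f z * Cx gamma f z).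
  { intros z Hz.
    assert (D : is_derive (fun y => Derive (Hsp gamma f) y - phi gamma f y) z
                  (Derive (Derive (Hsp gamma f)) z - Gx gamma f z * Cx gamma f z)).
    { apply (is_derive_minus (Derive (Hsp gamma f)) (phi gamma f)).
      - apply Derive_correct. apply HD; auto.
      - apply dphi; auto; apply Hfd; auto. }
    assert (A := agree S _ z a b _ HI Hz Ha Hb Hab D).
    assert (A' : Derive (Derive (Hsp gamma f)) z - Gx gamma f z * Cx gamma f z = 0).
    { apply A. intros y Hy. rewrite F1; auto. ring. }
    lra. }
  assert (F3 : forall z, S z -> 0 < Gx gamma f z).
  { intros z Hz. unfold Gx. assert (Hfz := Hf z Hz).
    assert (He := exp_pos (/ gamma * ln (f z))).
    apply Rdiv_lt_0_compat; auto. apply Rmult_lt_0_compat; lra. }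
  rewrite (Lm_iff S _ a Ha).
  rewrite (conv_iff S _ a b HI Ha Hb Hab HD).
  split.
  - intros P z Hz. assert (Q := P z Hz). rewrite F2 in Q by auto.
    fold (Cx gamma f z). assert (G := F3 z Hz).
    destruct (Rle_or_lt 0 (Cx gamma f z)); [lra|]. nra.
  - intros P z Hz. rewrite F2 by auto. assert (Q := P z Hz). fold (Cx gamma f z) in Q.
    assert (G := F3 z Hz). nra.
Qed.
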